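(* Let $X$ be a real Banach space and let $Y\subset X^*$ be a $w^*$-dense and norm-closed linear subspace. Then the locally convex space $(X,\mu(X,Y))$ is quasi-complete if and only if it is complete.
   Context: For a $w^*$-dense linear subspace $Y\subset X^*$ (not necessarily norm-closed), $\mu(X,Y)$ denotes the Mackey topology on $X$ associated to the dual pair $\langle X,Y\rangle$, i.e. the locally convex topology on $X$ of uniform convergence on the members of the family of all absolutely convex $w^*$-compact subsets of $Y$. A locally convex space is quasi-complete if every bounded closed subset of it is complete. *)

(* Defs.v *)
From HB Require Import structures.
From mathcomp Require Import all_boot all_order all_algebra.
From mathcomp Require Import all_classical all_reals all_analysis.
Set Implicit Arguments. Unset Strict Implicit. Unset Printing Implicit Defensive.
Import Order.TTheory GRing.Theory Num.Theory.
Import numFieldNormedType.Exports.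
Local Open Scope classical_set_scope.
Local Open Scope ring_scope.

Definition dual_space (R : realType) (X : normedModType R) : set (X -> R) :=
  [set f | (forall (a : R) (x y : X), f (a *: x + y) = a * f x + f y)
           /\ continuous f].

Definition dual_subspace (R : realType) (X : normedModType R) (Y : set (X -> R)) :=
  Y `<=` @dual_space R X /\ Y (fun _ => 0) /\
  (forall (a : R) f g, Y f -> Y g -> Y (fun x => a * f x + g x)).

(* w*-density: Y is dense in X^* for the weak-star topology, i.e. the
   topology of pointwise convergence on X (subspace of the product R^X). *)
Definition weak_star_dense (R : realType) (X : normedModType R) (Y : set (X -> R)) :=
  @dual_space R X `<=` closure (Y : set {ptws X -> R}).

(* Norm-closedness of Y in X^* for the dual norm
   ||f|| = sup_{||x|| <= 1} |f x|:  ||f - g|| <= e  iff  |f x - g x| <= e ||x||. *)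
Definition dual_norm_closed (R : realType) (X : normedModType R) (Y : set (X -> R)) :=
  forall f, @dual_space R X f ->
    (forall e : R, 0 < e -> exists2 g, Y g &
        forall x : X, `|f x - g x| <= e * `|x|) ->
    Y f.

Definition abs_convex (R : realType) (X : normedModType R) (K : set (X -> R)) :=
  forall f g (a b : R), K f -> K g -> `|a| + `|b| <= 1 ->
    K (fun x => a * f x + b * g x).

(* The family defining mu(X,Y): absolutely convex w*-compact subsets of Y *)
Definition mackey_family (R : realType) (X : normedModType R) (Y : set (X -> R))
    (K : set (X -> R)) :=
  K `<=` Y /\ abs_convex K /\ compact (K : set {ptws X -> R}).

Definition mackey_close (R : realType) (X : normedModType R) (Y : set (X -> R))
    (K : set (X -> R)) (e : R) (x y : X) :=
  forall f, K f -> `|f x - f y| < e.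

Definition mackey_cauchy (R : realType) (X : normedModType R) (Y : set (X -> R))
    (F : set_system X) :=
  forall K e, mackey_family Y K -> 0 < e ->
    exists2 A, F A & forall x y, A x -> A y -> mackey_close Y K e x y.

Definition mackey_converges (R : realType) (X : normedModType R) (Y : set (X -> R))
    (F : set_system X) (x : X) :=
  forall K e, mackey_family Y K -> 0 < e -> F [set y | mackey_close Y K e y x].

Definition mackey_bounded (R : realType) (X : normedModType R) (Y : set (X -> R))
    (B : set X) :=
  forall K, mackey_family Y K -> exists M : R, forall x f, B x -> K f -> `|f x| <= M.

Definition mackey_closed (R : realType) (X : normedModType R) (Y : set (X -> R))
    (B : set X) :=
  forall x, (forall K e, mackey_family Y K -> 0 < e ->
               exists2 b, B b & mackey_close Y K e b x) -> B x.

(* A subset B is complete: every proper Cauchy filter on X containing B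
   (i.e. a Cauchy filter on B) converges to a point of B. *)
Definition mackey_complete_set (R : realType) (X : normedModType R) (Y : set (X -> R))
    (B : set X) :=
  forall F : set_system X, ProperFilter F -> F B -> mackey_cauchy Y F ->
    exists2 x, B x & mackey_converges Y F x.

Definition mackey_complete (R : realType) (X : normedModType R) (Y : set (X -> R)) :=
  mackey_complete_set Y setT.

Definition mackey_quasi_complete (R : realType) (X : normedModType R)
    (Y : set (X -> R)) :=
  forall B : set X, mackey_bounded Y B -> mackey_closed Y B -> mackey_complete_set Y B.

(* Main.v *)
Require Import Defs.
From HB Require Import structures.
From mathcomp Require Import all_boot all_order all_algebra.
From mathcomp Require Import all_classical all_reals all_analysis.
Import Order.TTheory GRing.Theory Num.Theory.
Import numFieldNormedType.Exports.
Local Open Scope classical_set_scope.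
Local Open Scope ring_scope.
From mathcomp Require Import ring lra.
Set Implicit Arguments. Unset Strict Implicit. Unset Printing Implicit Defensive.


Lemma fin_cover (T : topologicalType) (A : set T) (I : eqType) (D : set I) (U : I -> set T) :
  compact A -> (forall i, D i -> open (U i)) -> (forall x, A x -> exists2 i, D i & U i x) ->
  exists s : seq I, (forall i, i \in s -> D i) /\ forall x, A x -> exists2 i, i \in s & U i x.
Proof.
move=> cA oU cov.
apply: contrapT => H.
have H' : forall s : seq I, (forall i, i \in s -> D i) ->
    exists x, A x /\ forall i, i \in s -> ~ U i x.
  move=> s sD; apply: contrapT => nx; apply: H; exists s; split => // x Ax.
  apply: contrapT => nix; apply: nx; exists x; split => // i iin Uix.
  by apply: nix; exists i.
pose G := filter_from [set s : seq I | forall i, i \in s -> D i]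
  (fun s => A `&` [set x | forall i, i \in s -> ~ U i x]).
have GF : ProperFilter G.
  apply: filter_from_proper.
    apply: filter_from_filter; first by exists [::].
    move=> s1 s2 h1 h2; exists (s1 ++ s2).
      by move=> i; rewrite mem_cat => /orP [] ?; [apply: h1 | apply: h2].
    move=> x [Ax hx]; split; split => // i ii; apply: hx; rewrite mem_cat ii ?orbT //.
  move=> s sD; have [x [Ax hx]] := H' s sD; by exists x.
have GA : G A by exists [::] => // x [].
have [x [Ax clx]] := cA G GF GA.
have [i Di Uix] := cov x Ax.
have GB : G (A `&` [set y | forall j, j \in [:: i] -> ~ U j y]).
  by exists [:: i] => // j; rewrite inE => /eqP ->.
have nU : nbhs x (U i) by apply: open_nbhs_nbhs; split => //; apply: oU.
have [y [[_ hy] Uy]] := clx _ _ GB nU.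
by apply: (hy i) => //; rewrite inE.
Qed.


Section Basics.
Variables (R : realType) (X : normedModType R).

Definition lin (f : X -> R) := forall (a : R) (x y : X), f (a *: x + y) = a * f x + f y.

Lemma lin0 f : lin f -> f 0 = 0.
Proof.
move=> lf; have := lf 1 0 0; rewrite scaler0 addr0 mul1r; lra.
Qed.

Lemma linZ f a x : lin f -> f (a *: x) = a * f x.
Proof. by move=> lf; have := lf a x 0; rewrite addr0 lin0 // addr0. Qed.

Lemma linD f x y : lin f -> f (x + y) = f x + f y.
Proof. by move=> lf; have := lf 1 x y; rewrite scale1r mul1r. Qed.

Lemma linN f x : lin f -> f (- x) = - f x.
Proof. by move=> lf; rewrite -scaleN1r linZ // mulN1r. Qed.

Lemma linB f x y : lin f -> f (x - y) = f x - f y.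
Proof. by move=> lf; rewrite linD // linN. Qed.

Lemma scale_bound f (r m : R) : lin f -> 0 < r ->
  (forall w : X, `|w| <= r -> `|f w| <= m) -> forall x, `|f x| <= m / r * `|x|.
Proof.
move=> lf r0 h x.
have [->|x0] := eqVneq x 0; first by rewrite lin0 // normr0 normr0 mulr0.
have nx : 0 < `|x| by rewrite normr_gt0.
have := h ((r / `|x|) *: x).
have rx0 : 0 <= r / `|x| by rewrite divr_ge0 // ltW.
rewrite normrZ (ger0_norm rx0) divfK ?normr_eq0 // lexx => /(_ isT).
rewrite linZ // normrM (ger0_norm rx0).
rewrite -ler_pdivlMl ?divr_gt0 // invf_div => hh.
by rewrite mulrAC -mulrA mulrC; apply: le_trans hh _; rewrite mulrC.
Qed.

Lemma dual_lin f : @dual_space R X f -> lin f.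
Proof. by case. Qed.

Lemma dual_bound f : @dual_space R X f -> exists2 L : R, 0 <= L & forall x, `|f x| <= L * `|x|.
Proof.
move=> [lf cf].
have lf' : linear f.
  by move=> a u v; rewrite lf.
pose g : {linear X -> R^o} := HB.pack f (GRing.isLinear.Build _ _ _ _ f lf').
have : continuous g by exact: cf.
move=> /linear_bounded_continuous /linear_boundedP [y [yreal fr]].
exists (Num.max y 0 + 1).
  by rewrite addr_ge0 // le_max lexx orbT.
apply: fr; rewrite ltr_pwDr // le_max lexx //.
Qed.
End Basics.

Lemma norm_le_dist (R : realType) (a b : R) : `|a| <= `|b| + `|b - a|.
Proof. by have := ler_distD b a 0; rewrite !subr0 distrC addrC. Qed.


Section CB.
Variables (R : realType) (X : completeNormedModType R).

Lemma eval_continuous (x : X) : continuous (fun f : {ptws X -> R} => f x).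
Proof. exact: (@proj_continuous X (fun _ => R) x). Qed.

Lemma compact_dual_bounded (K : set (X -> R)) : K `<=` @dual_space R X ->
  compact (K : set {ptws X -> R}) ->
  exists L : R, 0 <= L /\ forall f x, K f -> `|f x| <= L * `|x|.
Proof.
move=> KD cK.
have pb : pointwise_bounded K.
  move=> x.
  have cKx : compact ((fun f : {ptws X -> R} => f x) @` (K : set {ptws X -> R})).
    apply: (@continuous_compact {ptws X -> R} R (fun f : {ptws X -> R} => f x) (K : set {ptws X -> R})) => //.
    apply: continuous_subspaceT => f.
    exact: eval_continuous.
  have [M [Mr hM]] := compact_bounded cKx.
  exists (M + 1) => f Kf.
  have := hM (M + 1); rewrite ltrDl ltr01 => /(_ isT (f x)).
  by apply; exists f.
have BS := @Banach_Steinhauss R X R K.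
have ub : uniform_bounded K.
  apply: BS pb.
  move=> f Kf; have [lf cf] := KD f Kf; split.
    have [L L0 hL] := dual_bound (KD f Kf).
    move=> r; exists (L * `|r|) => x xr.
    apply: le_trans (hL x) _; apply: ler_wpM2l => //.
    by apply: le_trans xr (ler_norm _).
  by move=> a u v; rewrite lf.
have [M hM] := ub 1.
exists (Num.max M 0); split; first by rewrite le_max lexx orbT.
move=> f x Kf.
have := scale_bound (dual_lin (KD f Kf)) ltr01 (hM f Kf) x.
rewrite divr1 => /le_trans; apply; apply: ler_wpM2r => //.
by rewrite le_max lexx.
Qed.
End CB.


Section Dir.
Variables (R : realType) (X : completeNormedModType R) (Y : set (X -> R)).
Hypothesis HY : dual_subspace Y.

Lemma fst_eval_cvg (t : X) (p : {ptws X -> R} * {ptws X -> R}) :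
  (fun q : {ptws X -> R} * {ptws X -> R} => q.1 t) @ nbhs p --> p.1 t.
Proof.
have h1 : (fun q : {ptws X -> R} * {ptws X -> R} => q.1) @ nbhs p --> nbhs p.1.
  exact: cvg_fst.
have h2 := @eval_continuous R X t p.1.
exact: (cvg_comp _ _ h1 h2).
Qed.

Lemma snd_eval_cvg (t : X) (p : {ptws X -> R} * {ptws X -> R}) :
  (fun q : {ptws X -> R} * {ptws X -> R} => q.2 t) @ nbhs p --> p.2 t.
Proof.
have h1 : (fun q : {ptws X -> R} * {ptws X -> R} => q.2) @ nbhs p --> nbhs p.2.
  exact: cvg_snd.
have h2 := @eval_continuous R X t p.2.
exact: (cvg_comp _ _ h1 h2).
Qed.

Definition addp (p : {ptws X -> R} * {ptws X -> R}) : {ptws X -> R} :=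
  fun x => p.1 x + p.2 x.

Lemma add_ptws_continuous : continuous addp.
Proof.
move=> p.
apply: (proj2 (@pointwise_cvgP X R (addp @ nbhs p) (addp p) _)) => t.
have h := cvgD (@fst_eval_cvg t p) (@snd_eval_cvg t p).
exact: h.
Qed.

Local Notation fam := (mackey_family Y).

Lemma abs_convex0 (K : set (X -> R)) f : abs_convex K -> K f -> K (fun _ => 0).
Proof.
move=> ac Kf; have := ac f f 0 0 Kf Kf; rewrite normr0 addr0 ler01 => /(_ isT).
congr K; apply/funext => x; by rewrite !mul0r addr0.
Qed.

Lemma fam_directed K1 K2 : fam K1 -> fam K2 ->
  exists K, [/\ fam K, K1 `<=` K & K2 `<=` K].
Proof.
move=> [K1Y [ac1 cp1]] [K2Y [ac2 cp2]].
case: (pselect (exists g, K2 g)) => [[g0 K2g0]|nK2]; last first.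
  exists K1; split => //; move=> g K2g; exfalso; apply: nK2; by exists g.
case: (pselect (exists g, K1 g)) => [[f0 K1f0]|nK1]; last first.
  exists K2; split => //; move=> g K1g; exfalso; apply: nK1; by exists g.
have z1 := abs_convex0 ac1 K1f0.
have z2 := abs_convex0 ac2 K2g0.
exists (addp @` ((K1 : set {ptws X -> R}) `*` (K2 : set {ptws X -> R}))); split.
- split.
    move=> h [[f g] [/= Kf Kg] <-].
    have := HY.2.2 1 f g (K1Y f Kf) (K2Y g Kg).
    congr Y; apply/funext => x; by rewrite /addp /= mul1r.
  split.
    move=> h1 h2 a b [[f1 g1] [/= K1f1 K2g1] <-] [[f2 g2] [/= K1f2 K2g2] <-] hab.
    exists ((fun x => a * f1 x + b * f2 x), (fun x => a * g1 x + b * g2 x)).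
      by split; [apply: ac1 | apply: ac2].
    apply/funext => x; rewrite /addp /=; ring.
  apply: continuous_compact; last exact: compact_setX.
  apply: continuous_subspaceT; exact: add_ptws_continuous.
- move=> f Kf; exists (f, fun _ => 0) => //.
  apply/funext => x; by rewrite /addp /= addr0.
- move=> g Kg; exists (fun _ => 0, g) => //.
  apply/funext => x; by rewrite /addp /= add0r.
Qed.
End Dir.


Section TwoCase.
Variables (R : realType) (X : completeNormedModType R).

Lemma alg1 (x1 y1 x2 y2 e : R) : e <= x1 -> y1 < e -> x2 < e -> e <= y2 ->
  let s := (x1 - y1) / ((x1 - y1) + (y2 - x2)) in
  ((1 - s) * x1 + s * x2 < e \/ (1 - s) * y1 + s * y2 < e) ->
  (e - y2) / (x2 - y2) < (e - y1) / (x1 - y1).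
Proof.
move=> hx1 hy1 hx2 hy2 s hs.
have D1 : 0 < x1 - y1 by lra.
have D2 : 0 < y2 - x2 by lra.
have D : 0 < (x1 - y1) + (y2 - x2) by lra.
have n1 : x1 - y1 != 0 by apply/lt0r_neq0.
have n2 : y2 - x2 != 0 by apply/lt0r_neq0.
have n3 : x2 - y2 != 0 by rewrite -opprB oppr_eq0.
have nD : (x1 - y1) + (y2 - x2) != 0 by apply/lt0r_neq0.
pose V := (y2 - x2) * (x1 - e) + (x1 - y1) * (x2 - e).
have e1 : (1 - s) * x1 + s * x2 = e + V / ((x1 - y1) + (y2 - x2)).
  by rewrite /s /V; field.
have e2 : (1 - s) * y1 + s * y2 = e + V / ((x1 - y1) + (y2 - x2)).
  by rewrite /s /V; field.
have hv : V < 0.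
  have : V / ((x1 - y1) + (y2 - x2)) < 0.
    by case: hs; rewrite ?e1 ?e2 => hh; lra.
  by rewrite pmulr_llt0 // invr_gt0.
have -> : (e - y1) / (x1 - y1) = (e - y2) / (x2 - y2) + (- V) / ((x1 - y1) * (y2 - x2)).
  by rewrite /V; field; rewrite n1 n2 n3.
rewrite ltrDl divr_gt0 //; [lra | exact: mulr_gt0].
Qed.

Lemma ratio_cont (w1 w2 : X) (c : R) (f : {ptws X -> R}) : f w1 != f w2 ->
  {for f, continuous (fun g : {ptws X -> R} => (c - g w2) / (g w1 - g w2))}.
Proof.
move=> hf.
have e1 := @eval_continuous R X w1 f.
have e2 := @eval_continuous R X w2 f.
have h1 : (fun g : {ptws X -> R} => c - g w2) @ nbhs f --> c - f w2.
  exact: (cvgB (cvg_cst c) e2).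
have h3 : (fun g : {ptws X -> R} => g w1 - g w2) @ nbhs f --> f w1 - f w2.
  exact: (cvgB e1 e2).
have h2 : (fun g : {ptws X -> R} => (g w1 - g w2)^-1) @ nbhs f --> (f w1 - f w2)^-1.
  apply: (cvgV _ h3); by rewrite subr_eq0.
exact: (cvgM h1 h2).
Qed.


Lemma divr_le1 (N D : R) : 0 < D -> N <= D -> N / D <= 1.
Proof. by move=> D0 ND; rewrite ler_pdivrMr // mul1r. Qed.

Lemma two_case (K : set (X -> R)) (w1 w2 : X) (e : R) :
  (forall f g s, K f -> K g -> 0 <= s -> s <= 1 ->
     K (fun x => (1 - s) * f x + s * g x)) -> compact (K : set {ptws X -> R}) ->
  (forall f, K f -> f w1 < e \/ f w2 < e) ->
  exists t : R, [/\ 0 <= t, t <= 1 &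
    forall f, K f -> t * f w1 + (1 - t) * f w2 < e].
Proof.
move=> ac cK h.
case: (pselect (exists f, K f /\ e <= f w1)) => [[f0 [Kf0 hf0]]|n1]; last first.
  exists 1; split => // f Kf; rewrite subrr mul0r addr0 mul1r.
  by rewrite ltNge; apply/negP => hh; apply: n1; exists f.
case: (pselect (exists f, K f /\ e <= f w2)) => [[g0 [Kg0 hg0]]|n2]; last first.
  exists 0; split => // f Kf; rewrite subr0 mul0r add0r mul1r.
  by rewrite ltNge; apply/negP => hh; apply: n2; exists f.
pose K1 : set {ptws X -> R} :=
  (K : set {ptws X -> R}) `&` [set f : {ptws X -> R} | e <= f w1].
pose K2 : set {ptws X -> R} :=
  (K : set {ptws X -> R}) `&` [set f : {ptws X -> R} | e <= f w2].
have cl1 : closed [set f : {ptws X -> R} | e <= f w1].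
  apply: (@preimage_closed _ _ (fun f : {ptws X -> R} => f w1) [set x | e <= x]); last exact: closed_ge.
  by move=> f _; exact: eval_continuous.
have cl2 : closed [set f : {ptws X -> R} | e <= f w2].
  apply: (@preimage_closed _ _ (fun f : {ptws X -> R} => f w2) [set x | e <= x]); last exact: closed_ge.
  by move=> f _; exact: eval_continuous.
have cK1 : compact K1 by exact: compact_closedI.
have cK2 : compact K2 by exact: compact_closedI.
pose r := fun g : {ptws X -> R} => (e - g w2) / (g w1 - g w2).
have rc : forall g : {ptws X -> R}, K g -> (e <= g w1 \/ e <= g w2) -> {for g, continuous r}.
  move=> g Kg hg; apply: ratio_cont; apply/eqP => heq.
  by case: (h g Kg) => hh; case: hg => hh'; lra.
have [f1 f1in hf1] : exists2 c, c \in K1 & forall t, t \in K1 -> r c <= r t.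
  apply: compact_EVT_min => //; first by exists f0.
  by apply: continuous_in_subspaceT => g /set_mem [Kg hg]; apply: rc => //; left.
have [f2 f2in hf2] : exists2 c, c \in K2 & forall t, t \in K2 -> r t <= r c.
  apply: compact_EVT_max => //; first by exists g0.
  by apply: continuous_in_subspaceT => g /set_mem [Kg hg]; apply: rc => //; right.
move: (f1in) (f2in) => /set_mem [Kf1 e1] /set_mem [Kf2 e2].
have {}e1 : e <= f1 w1 by [].
have {}e2 : e <= f2 w2 by [].
have y1e : f1 w2 < e by case: (h f1 Kf1) => // hh; move: e1 => /= e1; lra.
have x2e : f2 w1 < e by case: (h f2 Kf2) => // hh; move: e2 => /= e2; lra.
have r21 : r f2 < r f1.
  apply: (alg1 e1 y1e x2e e2).
  set s := (f1 w1 - f1 w2) / _.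
  have s0 : 0 <= s by rewrite divr_ge0 //; lra.
  have s1 : s <= 1 by apply: divr_le1; lra.
  by have /h := ac f1 f2 s Kf1 Kf2 s0 s1.
have r2 : 0 <= r f2.
  rewrite /r -mulrNN -invrN; apply: divr_ge0; lra.
have r1 : r f1 <= 1 by apply: divr_le1; lra.
exists ((r f1 + r f2) / 2); split; [lra | lra |].
move=> f Kf.
have ht : r f2 < (r f1 + r f2) / 2 < r f1 by apply/andP; split; lra.
set t := (r f1 + r f2) / 2 in ht *.
rewrite mulrBl mul1r.
case: (pselect (e <= f w1)) => hf1'.
  have yf : f w2 < e by case: (h f Kf) => // hh; lra.
  have := hf1 f (mem_set (conj Kf hf1')).
  rewrite /r => hh.
  have Dp : 0 < f w1 - f w2 by lra.
  have : t < (e - f w2) / (f w1 - f w2).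
    by move: ht => /andP [_ ht]; apply: (lt_le_trans ht).
  rewrite ltr_pdivlMr // mulrBr => hh2; lra.
case: (pselect (e <= f w2)) => hf2'.
  have xf : f w1 < e by case: (h f Kf) => // hh; lra.
  have := hf2 f (mem_set (conj Kf hf2')).
  rewrite /r => hh.
  have Dp : 0 < f w2 - f w1 by lra.
  have : (f w2 - e) / (f w2 - f w1) < t.
    have -> : (f w2 - e) / (f w2 - f w1) = (e - f w2) / (f w1 - f w2).
      by rewrite -mulrNN -invrN !opprB.
    by move: ht => /andP [ht _]; apply: (le_lt_trans hh).
  rewrite ltr_pdivrMr // mulrBr => hh2; lra.
have xf : f w1 < e by rewrite ltNge; apply/negP.
have yf : f w2 < e by rewrite ltNge; apply/negP.
have t0 : 0 < t by move: ht => /andP [ht _]; lra.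
have t1 : t <= 1 by move: ht => /andP [_ ht]; lra.
nra.
Qed.
End TwoCase.


Section NCase.
Variables (R : realType) (X : completeNormedModType R).

Definition convK (K : set (X -> R)) := forall f g s, K f -> K g -> 0 <= s -> s <= 1 ->
     K (fun x => (1 - s) * f x + s * g x).

Lemma n_case (zs : seq X) (x0 : X) (c e : R) : 0 <= c ->
  (forall z, z \in zs -> `|z| <= c) ->
  forall K : set (X -> R), K `<=` @dual_space R X -> convK K ->
  compact (K : set {ptws X -> R}) ->
  (forall f, K f -> exists2 z, z \in zs & f z - f x0 < e) ->
  exists w : X, `|w| <= c /\ forall f, K f -> f w - f x0 < e.
Proof.
move=> c0; elim: zs => [|z0 zs IH] hzs K KD cvK cK hK.
  exists 0; split; first by rewrite normr0.
  by move=> f /hK [z].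
pose K' : set {ptws X -> R} :=
  (K : set {ptws X -> R}) `&` [set f : {ptws X -> R} | e <= f z0 - f x0].
have cl : closed [set f : {ptws X -> R} | e <= f z0 - f x0].
  apply: (@preimage_closed _ _ (fun f : {ptws X -> R} => f z0 - f x0) [set x | e <= x]); last exact: closed_ge.
  move=> f _.
  have e1 := @eval_continuous R X z0 f.
  have e2 := @eval_continuous R X x0 f.
  exact: (cvgB e1 e2).
have [w' [w'c hw']] : exists w' : X, `|w'| <= c /\ forall f, K' f -> f w' - f x0 < e.
  apply: IH.
  - by move=> z zin; apply: hzs; rewrite in_cons zin orbT.
  - by move=> f [Kf _]; exact: KD.
  - move=> f g s [Kf hf] [Kg hg] s0 s1; split; first exact: cvK.
    have lf := dual_lin (KD f Kf).
    simpl in hf, hg |- *; nra.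
  - exact: compact_closedI.
  - move=> f [Kf hf]; have [z] := hK f Kf.
    rewrite in_cons => /orP [/eqP ->|zin] hz; last by exists z.
    by simpl in hf; lra.
have [t [t0 t1 ht]] : exists t : R, [/\ 0 <= t, t <= 1 &
    forall f, K f -> t * f (z0 - x0) + (1 - t) * f (w' - x0) < e].
  apply: two_case => //.
  move=> f Kf; have lf := dual_lin (KD f Kf); rewrite !(@linB R X f _ _ lf).
  case: (pselect (e <= f z0 - f x0)) => hf; last by left; rewrite ltNge; apply/negP.
  by right; apply: hw'.
exists (t *: z0 + (1 - t) *: w'); split.
  apply: le_trans (ler_normD _ _) _.
  rewrite !normrZ (ger0_norm t0) ger0_norm ?subr_ge0 //.
  have := hzs z0 (mem_head _ _) => hz0.
  nra.
move=> f Kf; have lf := dual_lin (KD f Kf).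
have := ht f Kf; rewrite !(@linB R X f _ _ lf) (@linD R X f _ _ lf) !(@linZ R X f _ _ lf); nra.
Qed.
End NCase.


Section Approx.
Variables (R : realType) (X : completeNormedModType R) (Y : set (X -> R)).
Hypothesis HY : dual_subspace Y.

Lemma approxG (F : set_system X) (c : R) : ProperFilter F -> mackey_cauchy Y F -> 0 < c ->
  (forall y, Y y -> (forall x, `|y x| <= `|x|) ->
     exists2 A, F A & forall x, A x -> `|y x| <= c) ->
  forall A K e, F A -> mackey_family Y K -> 0 < e ->
  exists2 x0, A x0 & exists z : X, `|z| <= c /\ forall f, K f -> `|f z - f x0| < e.
Proof.
move=> PF Fc c0 hc A K e FA fK e0.
move: (fK) => [KY [acK cK]].
have KD : K `<=` @dual_space R X by move=> f Kf; apply: HY.1; apply: KY.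
have e4 : 0 < e / 4 by rewrite divr_gt0.
have [AK FAK hAK] := Fc K (e / 4) fK e4.
have [x0 [Ax0 AKx0]] := filter_ex (filterI FA FAK).
exists x0 => //.
have claim1 : forall f, K f -> forall L, 0 < L -> (forall x, `|f x| <= L * `|x|) ->
    `|f x0| <= c * L + e / 4.
  move=> f Kf L L0 hL.
  have Li : 0 <= L^-1 by rewrite invr_ge0 ltW.
  have Yy : Y (fun x => L^-1 * f x + 0) := HY.2.2 L^-1 f (fun _ => 0) (KY f Kf) HY.2.1.
  have hy : forall x, `|L^-1 * f x + 0| <= `|x|.
    move=> x; rewrite addr0 normrM (ger0_norm Li).
    by rewrite ler_pdivrMl // hL.
  have [Af FAf hAf] := hc _ Yy hy.
  have [x1 [Afx1 AKx1]] := filter_ex (filterI FAf FAK).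
  have h1 := hAf x1 Afx1.
  have h2 := hAK x1 x0 AKx1 AKx0 f Kf.
  rewrite addr0 normrM (ger0_norm Li) ler_pdivrMl // in h1.
  apply: le_trans (norm_le_dist (f x0) (f x1)) _.
  by apply: lerD; [rewrite mulrC | exact: ltW].
have claim2 : forall f, K f -> exists z : X, `|z| <= c /\ f z - f x0 < e.
  move=> f Kf; have lf := dual_lin (KD f Kf).
  case: (lerP 0 (f x0)) => hf.
    exists 0; rewrite normr0 (lin0 lf); split; [exact: ltW | lra].
  apply: contrapT => nz.
  have hb : forall w : X, `|w| <= c -> `|f w| <= - f x0 - e.
    move=> w wc.
    have h1 : ~ (f w - f x0 < e) by move=> hh; apply: nz; exists w.
    have h2 : ~ (f (- w) - f x0 < e) by move=> hh; apply: nz; exists (- w); rewrite normrN.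
    rewrite (linN _ lf) in h2.
    move/negP: h1; rewrite -leNgt => h1.
    move/negP: h2; rewrite -leNgt => h2.
    rewrite ler_norml; apply/andP; split; lra.
  have m0 : 0 <= - f x0 - e.
    have := hb 0; rewrite normr0 (lin0 lf) normr0 => hh; apply: hh; exact: ltW.
  pose L := (- f x0 - e + e / 4) / c.
  have L0 : 0 < L by rewrite /L divr_gt0 //; lra.
  have hL : forall x, `|f x| <= L * `|x|.
    move=> x; apply: le_trans (scale_bound lf c0 hb x) _.
    apply: ler_wpM2r => //; rewrite /L ler_pM2r ?invr_gt0 //; lra.
  have := claim1 f Kf L L0 hL.
  have -> : c * L = - f x0 - e + e / 4 by rewrite /L; field; apply/lt0r_neq0.
  rewrite ltr0_norm //; lra.
have oU : forall z, [set z : X | `|z| <= c] z ->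
    open [set g : {ptws X -> R} | g z - g x0 < e].
  move=> z _.
  apply: (@open_comp _ _ (fun g : {ptws X -> R} => g z - g x0) [set x | x < e]); last exact: open_lt.
  move=> g _.
  have e1 := @eval_continuous R X z g.
  have e2 := @eval_continuous R X x0 g.
  exact: (cvgB e1 e2).
have cv : forall f : {ptws X -> R}, (K : set {ptws X -> R}) f ->
    exists2 z, [set z : X | `|z| <= c] z & [set g : {ptws X -> R} | g z - g x0 < e] f.
  move=> f Kf; have [z [zc hz]] := claim2 f Kf; by exists z.
have [D' [sD covD']] := @fin_cover {ptws X -> R} (K : set {ptws X -> R}) X
  [set z : X | `|z| <= c] (fun z => [set g : {ptws X -> R} | g z - g x0 < e]) cK oU cv.
have hzs : forall z, z \in D' -> `|z| <= c by move=> z zin; have := sD z zin.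
have cvK : convK K.
  move=> f g s Kf Kg s0 s1.
  have := acK f g (1 - s) s Kf Kg.
  rewrite (ger0_norm s0) ger0_norm ?subr_ge0 // subrK lexx.
  by move/(_ isT).
have cov2 : forall f, K f -> exists2 z, z \in D' & f z - f x0 < e.
  move=> f Kf; have [z zin hz] := covD' f Kf; by exists z.
have [w [wc hw]] := @n_case R X D' x0 c e (ltW c0) hzs K KD cvK cK cov2.
exists w; split => // f Kf.
have Kf' : K (fun x => -1 * f x + 0 * f x) by apply: acK => //; rewrite normrN normr1 normr0 addr0.
have := hw _ Kf'; have := hw f Kf => /= h1 h2.
rewrite ltr_norml; apply/andP; split; lra.
Qed.
End Approx.


Section Ser.
Variable R : realType.
Local Notation r := (2^-1 : R).

Lemma r0 : 0 < r. Proof. by rewrite invr_gt0. Qed.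
Lemma r1 : r < 1. Proof. by rewrite invf_lt1 // ltr1n. Qed.

Lemma geo_tail N m : \sum_(N <= k < N + m) r ^+ k <= 2 * r ^+ N - 2 * r ^+ (N + m).
Proof.
elim: m => [|m IH]; first by rewrite addn0 big_geq // subrr.
rewrite addnS big_nat_recr /= ?leq_addr //.
apply: le_trans (lerD IH (lexx _)) _.
rewrite exprS.
have h : 0 <= r ^+ (N + m) by rewrite exprn_ge0 // ltW // r0.
have -> : (2 : R) * (2^-1 * r ^+ (N + m)) = r ^+ (N + m) by rewrite mulrA mulfV ?mul1r.
lra.
Qed.

Lemma series_tail (u : R ^nat) (M : R) : 0 <= M -> (forall n, `|u n| <= M * r ^+ n) ->
  forall N m, (N <= m)%N -> `|series u m - series u N| <= 2 * M * r ^+ N.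
Proof.
move=> M0 hu N m Nm.
rewrite sub_series_geq //.
apply: le_trans (ler_norm_sum _ _ _) _.
apply: le_trans (ler_sum _ (fun k _ => hu k)) _.
rewrite -mulr_sumr.
have := geo_tail N (m - N).
rewrite subnKC // => h.
have h2 : 0 <= r ^+ m by rewrite exprn_ge0 // ltW // r0.
rewrite (mulrC 2 M) -mulrA; apply: ler_wpM2l => //; lra.
Qed.

Lemma series_cvg (u : R ^nat) (M : R) : 0 <= M -> (forall n, `|u n| <= M * r ^+ n) ->
  cvgn (series u).
Proof.
move=> M0 hu; apply: normed_cvg.
apply: (@series_le_cvg R _ (geometric M r)).
- by move=> n /=.
- by move=> n; rewrite /geometric /= mulr_ge0 // exprn_ge0 // ltW // r0.
- by move=> n; exact: hu.
- by apply: is_cvg_geometric_series; rewrite ger0_norm ?r1 // ltW // r0.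
Qed.

Lemma series_lim_tail (u : R ^nat) (M : R) : 0 <= M -> (forall n, `|u n| <= M * r ^+ n) ->
  forall N, `|limn (series u) - series u N| <= 2 * M * r ^+ N.
Proof.
move=> M0 hu N.
have cv := series_cvg M0 hu.
have ht := series_tail M0 hu.
have ev : \forall m \near \oo, `|series u m - series u N| <= 2 * M * r ^+ N.
  by near=> m; apply: ht; near: m; exact: nbhs_infty_ge.
rewrite ler_norml; apply/andP; split.
  have : series u N - 2 * M * r ^+ N <= limn (series u).
    apply: limr_ge => //; apply: filterS ev => m; rewrite ler_norml => /andP [h1 h2]; lra.
  lra.
have : limn (series u) <= series u N + 2 * M * r ^+ N.
  apply: limr_le => //; apply: filterS ev => m; rewrite ler_norml => /andP [h1 h2]; lra.
lra.
Unshelve. all: by end_near.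
Qed.
End Ser.


Section Constr.
Variables (R : realType) (X : normedModType R) (Y : set (X -> R)).
Hypothesis HY : dual_subspace Y.
Hypothesis Hcl : dual_norm_closed Y.
Variable z : nat -> X -> R.
Hypothesis zY : forall n, Y (z n).
Hypothesis zb : forall n x, `|z n x| <= (2^-1 : R) ^+ n * `|x|.
Local Notation r := (2^-1 : R).

Definition cube : set (nat -> R) := [set a | forall n, `|a n| <= 1].
Definition uu (a : nat -> R) (x : X) : R ^nat := fun n => a n * z n x.
Definition S (a : nat -> R) : X -> R := fun x => limn (series (uu a x)).

Lemma zlin n : lin (z n).
Proof. exact: dual_lin (HY.1 _ (zY n)). Qed.

Lemma ub a x : cube a -> forall n, `|uu a x n| <= `|x| * r ^+ n.
Proof.
move=> ca n; rewrite /uu normrM.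
apply: le_trans (ler_wpM2r (normr_ge0 _) (ca n)) _; rewrite mul1r mulrC; exact: zb.
Qed.

Lemma S_cvg a x : cube a -> series (uu a x) @ \oo --> S a x.
Proof. by move=> ca; apply: (series_cvg (normr_ge0 x) (ub x ca)). Qed.

Lemma S_tail a x N : cube a -> `|S a x - series (uu a x) N| <= 2 * `|x| * r ^+ N.
Proof. by move=> ca; apply: (series_lim_tail (normr_ge0 x) (ub x ca)). Qed.

Lemma S_bound a x : cube a -> `|S a x| <= 2 * `|x|.
Proof.
move=> ca; have := S_tail x 0 ca.
by rewrite /series /= big_geq // subr0 expr0 mulr1.
Qed.

Lemma series_uu_lin a (al : R) x y N :
  series (uu a (al *: x + y)) N = al * series (uu a x) N + series (uu a y) N.
Proof.
rewrite /series /= mulr_sumr -big_split /=; apply: eq_bigr => k _.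
by rewrite /uu (zlin k); ring.
Qed.

Lemma S_lin a : cube a -> lin (S a).
Proof.
move=> ca al x y.
have e : series (uu a (al *: x + y)) =
    (fun N => al *: series (uu a x) N + series (uu a y) N).
  by apply/funext => N; rewrite series_uu_lin.
rewrite /S e.
apply: cvg_lim => //.
exact: (cvgD (cvgZ (cvg_cst al) (@S_cvg a x ca)) (@S_cvg a y ca)).
Qed.

Lemma lin_bounded_continuous (f : X -> R) (L : R) : lin f ->
  (forall x, `|f x| <= L * `|x|) -> continuous f.
Proof.
move=> lf h.
have lf' : linear f by move=> a u v; rewrite lf.
pose g : {linear X -> R^o} := HB.pack f (GRing.isLinear.Build _ _ _ _ f lf').
have : continuous g; last by [].
apply/linear_bounded_continuous/linear_boundedP.
near=> r' => x; apply: le_trans (h x) _; apply: ler_wpM2r; first by [].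
by near: r'; apply: nbhs_pinfty_ge; rewrite num_real.
Unshelve. all: by end_near.
Qed.

Lemma S_dual a : cube a -> @dual_space R X (S a).
Proof.
move=> ca; split; first exact: S_lin.
apply: (@lin_bounded_continuous _ 2); first exact: S_lin.
by move=> x; exact: S_bound.
Qed.

Lemma P_Y a N : Y (fun x => series (uu a x) N).
Proof.
elim: N => [|N IH].
  have -> : (fun x => series (uu a x) 0) = (fun _ => 0).
    by apply/funext => x; rewrite /series /= big_geq.
  exact: HY.2.1.
have -> : (fun x => series (uu a x) N.+1) = (fun x => a N * z N x + series (uu a x) N).
  by apply/funext => x; rewrite seriesSr addrC.
exact: HY.2.2.
Qed.

Lemma small_pow (e : R) : 0 < e -> exists N, 2 * r ^+ N <= e.
Proof.
move=> e0.
have rr : `|r| < 1 by rewrite ger0_norm ?r1 // ltW // r0.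
have := cvgr0_norm_lt _ (cvg_expr rr) _ (divr_gt0 e0 (ltr0Sn _ 1)).
case=> N0 _ hN; exists N0.
have h : `|r ^+ N0| < e / 2 := hN N0 (leqnn N0).
rewrite ger0_norm in h; last by rewrite exprn_ge0 // ltW // r0.
lra.
Qed.

Lemma S_Y a : cube a -> Y (S a).
Proof.
move=> ca; apply: Hcl; first exact: S_dual.
move=> e e0; have [N hN] := small_pow e0.
exists (fun x => series (uu a x) N); first exact: P_Y.
move=> x; apply: le_trans (S_tail x N ca) _.
rewrite mulrAC; apply: ler_wpM2r => //.
Qed.

Lemma proj_cont (N : nat) : continuous (fun a : {ptws nat -> R} => a N).
Proof. exact: (@proj_continuous nat (fun _ => R) N). Qed.

Lemma Pc (x : X) N : continuous (fun a : {ptws nat -> R} => series (uu a x) N).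
Proof.
elim: N => [|N IH].
  have e : forall a : {ptws nat -> R}, series (uu a x) 0 = 0.
    by move=> a; rewrite /series /= big_geq.
  move=> a0; rewrite /prop_for /continuous_at /= (e a0).
  have H : {near nbhs a0, (fun _ : {ptws nat -> R} => (0:R)) =1
      (fun a : {ptws nat -> R} => series (uu a x) 0)} by near=> a; rewrite e.
  exact: cvg_trans (near_eq_cvg H) (cvg_cst 0).
have e : forall a : {ptws nat -> R}, series (uu a x) N.+1 = series (uu a x) N + a N * z N x.
  by move=> a; rewrite seriesSr.
move=> a0; rewrite /prop_for /continuous_at /= (e a0).
have H : {near nbhs a0, (fun a : {ptws nat -> R} => series (uu a x) N + a N * z N x) =1
    (fun a : {ptws nat -> R} => series (uu a x) N.+1)} by near=> a; rewrite e.
apply: cvg_trans (near_eq_cvg H) _.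
have h1 := IH a0.
have h2 := @proj_cont N a0.
have h3 : (fun a : {ptws nat -> R} => a N * z N x) @ nbhs a0 --> a0 N * z N x.
  exact: (cvgM h2 (cvg_cst (z N x))).
exact: (cvgD h1 h3).
Unshelve. all: by end_near.
Qed.

Lemma dist3' (a b c d : R) : `|a - d| <= `|a - b| + `|b - c| + `|c - d|.
Proof. by apply: le_trans (ler_distD b _ _) _; rewrite -addrA lerD2l ler_distD. Qed.

Lemma S_within : {within (cube : set {ptws nat -> R}),
  continuous (S : {ptws nat -> R} -> {ptws X -> R})}.
Proof.
apply/subspace_continuousP => a0 ca0.
apply: (proj2 (@pointwise_cvgP X R (S @ within (cube : set {ptws nat -> R}) (nbhs a0)) (S a0) _)) => x.
apply/cvgrPdist_lt => e e0.
have ee : 0 < e / (3 * (`|x| + 1)) by rewrite divr_gt0 // mulr_gt0 // ltr_pwDr.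
have [N hN] := small_pow ee.
have tl : 2 * `|x| * r ^+ N <= e / 3.
  have hr : 0 <= r ^+ N by rewrite exprn_ge0 // ltW // r0.
  move: hN; rewrite ler_pdivlMr ?mulr_gt0 // ?ltr_pwDr // => hN.
  nra.
have hP := @Pc x N a0.
move/cvgrPdist_lt: hP => /(_ (e / 3)) hP.
have := hP (divr_gt0 e0 (ltr0Sn _ 2)).
rewrite /within; apply: filterS => a hPa ca.
have t1 := @S_tail a0 x N ca0.
have t2 := @S_tail a x N ca.
apply: le_lt_trans (dist3' _ (series (uu a0 x) N) (series (uu a x) N) _) _.
rewrite (distrC (series (uu a x) N)).
have : e = e / 3 + e / 3 + e / 3 by field.
move: hPa => /= hPa.
lra.
Qed.

Lemma cube_compact : compact (cube : set {ptws nat -> R}).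
Proof.
have h : compact [set x : R | `|x| <= 1].
  have -> : [set x : R | `|x| <= 1] = `[-1, 1]%classic.
    by apply/seteqP; split => x /=; rewrite in_itv /= ler_norml.
  exact: segment_compact.
exact: (@tychonoff nat (fun _ => R) (fun _ => [set x : R | `|x| <= 1]) (fun _ => h)).
Qed.

Lemma S_comb a b (al be : R) : cube a -> cube b ->
  (fun x => al * S a x + be * S b x) = S (fun n => al * a n + be * b n).
Proof.
move=> ca cb; apply/funext => x; rewrite /S.
have e : series (uu (fun n => al * a n + be * b n) x) =
    (fun N => al * series (uu a x) N + be * series (uu b x) N).
  apply/funext => N; rewrite /series /= !mulr_sumr -big_split /=.
  by apply: eq_bigr => k _; rewrite /uu; ring.
rewrite e; apply/esym/cvg_lim => //.
exact: (cvgD (cvgZ (cvg_cst al) (@S_cvg a x ca)) (cvgZ (cvg_cst be) (@S_cvg b x cb))).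
Qed.

Lemma cube_comb a b (al be : R) : cube a -> cube b -> `|al| + `|be| <= 1 ->
  cube (fun n => al * a n + be * b n).
Proof.
move=> ca cb h n; apply: le_trans (ler_normD _ _) _.
rewrite !normrM; apply: le_trans h.
apply: lerD; rewrite -{2}(mulr1 `|_|); apply: ler_wpM2l => //.
Qed.

Definition delta (n : nat) : nat -> R := fun k => if k == n then 1 else 0.

Lemma cube_delta n : cube (delta n).
Proof. by move=> k; rewrite /delta; case: (k == n); rewrite ?normr1 ?normr0. Qed.

Lemma S_delta n : S (delta n) = z n.
Proof.
apply/funext => x.
have h : forall m, series (uu (delta n) x) (n.+1 + m)%N = z n x.
  elim=> [|m IH].
    rewrite addn0 seriesSr.
    have -> : series (uu (delta n) x) n = 0.
      rewrite /series /=; apply: big1_seq => k /andP [_].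
      rewrite mem_index_iota => /andP [_ kn].
      by rewrite /uu /delta (ltn_eqF kn) mul0r.
    by rewrite /uu /delta eqxx mul1r add0r.
  rewrite addnS seriesSr IH /uu /delta.
  have -> : ((n.+1 + m)%N == n) = false by apply/negbTE; rewrite neq_ltn addSn ltnS leq_addr orbT.
  by rewrite mul0r addr0.
apply: cvg_lim => //; apply: cvg_near_cst.
near=> m.
have hm : (n.+1 <= m)%N by near: m; exact: nbhs_infty_ge.
by rewrite -(subnKC hm) h.
Unshelve. all: by end_near.
Qed.

Definition Kset : set (X -> R) := S @` cube.

Lemma Kset_fam : mackey_family Y Kset.
Proof.
split; first by move=> f [a ca <-]; exact: S_Y.
split.
  move=> f g al be [a ca <-] [b cb <-] h.
  rewrite (@S_comb a b al be ca cb); exists (fun n => al * a n + be * b n) => //.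
  exact: cube_comb.
exact: (continuous_compact S_within cube_compact).
Qed.

Lemma Kset_bound f x : Kset f -> `|f x| <= 2 * `|x|.
Proof. by move=> [a ca <-]; exact: S_bound. Qed.

Lemma Kset_z n : Kset (z n).
Proof. by exists (delta n); [exact: cube_delta | exact: S_delta]. Qed.
End Constr.


Section BB.
Variables (R : realType) (X : normedModType R) (Y : set (X -> R)).
Hypothesis HY : dual_subspace Y.
Hypothesis Hcl : dual_norm_closed Y.
Local Notation r := (2^-1 : R).

Lemma pow2_big (M : R) : exists n : nat, M < (2 : R) ^+ n.
Proof.
exists (Num.Def.trunc M).+1.
apply: lt_trans (truncnS_gt M) _.
rewrite -natrX ltr_nat; exact: ltn_expl.
Qed.

Lemma bound_b (F : set_system X) : ProperFilter F -> mackey_cauchy Y F ->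
  exists c : R, 0 < c /\ forall y, Y y -> (forall x, `|y x| <= `|x|) ->
     exists2 A, F A & forall x, A x -> `|y x| <= c.
Proof.
move=> PF Fc.
apply: contrapT => H.
have H' : forall n : nat, exists y : X -> R, Y y /\ (forall x, `|y x| <= `|x|) /\
    forall A, F A -> exists2 x, A x & (4 : R) ^+ n < `|y x|.
  move=> n; apply: contrapT => nn; apply: H.
  exists ((4 : R) ^+ n); split; first by rewrite exprn_gt0.
  move=> y Yy hy; apply: contrapT => nA; apply: nn.
  exists y; split => //; split => // A FA.
  apply: contrapT => nx; apply: nA; exists A => // x Ax.
  by rewrite leNgt; apply/negP => hlt; apply: nx; exists x.
have [yf hyf] := choice H'.
pose z n := fun x => r ^+ n * yf n x.
have rn n : 0 <= r ^+ n by rewrite exprn_ge0 // ltW // r0.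
have zY n : Y (z n).
  have := HY.2.2 (r ^+ n) (yf n) (fun _ => 0) (proj1 (hyf n)) HY.2.1.
  by congr Y; apply/funext => x; rewrite addr0.
have zb n x : `|z n x| <= r ^+ n * `|x|.
  rewrite /z normrM (ger0_norm (rn n)); apply: ler_wpM2l => //.
  exact: (proj1 (proj2 (hyf n))).
have big n : forall A, F A -> exists2 x, A x & (2 : R) ^+ n < `|z n x|.
  move=> A FA; have [x Ax hx] := proj2 (proj2 (hyf n)) A FA.
  exists x => //; rewrite /z normrM (ger0_norm (rn n)).
  have -> : (2 : R) ^+ n = r ^+ n * (4 : R) ^+ n.
    by rewrite -exprMn; congr (_ ^+ _); field.
  by rewrite ltr_pM2l // exprn_gt0 // r0.
have fK := Kset_fam HY Hcl zY zb.
have [A FA hA] := Fc _ 1 fK ltr01.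
have [x0 Ax0] := filter_ex FA.
have [n hn] := pow2_big (2 * `|x0| + 1).
have [x Ax hx] := big n A FA.
have h1 := hA x x0 Ax Ax0 (z n) (Kset_z z n).
have h2 := Kset_bound zb x0 (Kset_z z n).
have := norm_le_dist (z n x) (z n x0).
rewrite distrC; lra.
Qed.
End BB.


Section Hard.
Variables (R : realType) (X : completeNormedModType R) (Y : set (X -> R)).
Hypothesis HY : dual_subspace Y.
Hypothesis Hcl : dual_norm_closed Y.

Local Notation fam := (mackey_family Y).

Lemma dist3 (a b c d : R) : `|a - d| <= `|a - b| + `|b - c| + `|c - d|.
Proof. by apply: le_trans (ler_distD b _ _) _; rewrite -addrA lerD2l ler_distD. Qed.

Lemma famb K : fam K ->
  exists L : R, 0 <= L /\ forall f x, K f -> `|f x| <= L * `|x|.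
Proof.
move=> [KY [_ cK]]; apply: compact_dual_bounded => // f Kf.
by apply: HY.1; apply: KY.
Qed.

Lemma fam0 : fam set0.
Proof.
split; first by [].
split; first by move=> f g a b [].
exact: compact0.
Qed.

Lemma qc_complete : mackey_quasi_complete Y -> mackey_complete Y.
Proof.
move=> QC F PF _ Fc.
have [c [c0 hc]] := bound_b HY Hcl PF Fc.
pose D := [set z : X | `|z| <= c].
pose B := [set x | forall K e, fam K -> 0 < e ->
  exists2 b, D b & mackey_close Y K e b x].
pose G (i : set X * set (X -> R) * R) :=
  [set x | B x /\ exists2 a, i.1.1 a & mackey_close Y i.1.2 i.2 a x].
pose I := [set i : set X * set (X -> R) * R | [/\ F i.1.1, fam i.1.2 & 0 < i.2]].
pose H := filter_from I G.
have HF : ProperFilter H.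
  apply: filter_from_proper.
    apply: filter_from_filter.
      by exists (setT, set0, 1); split => //=; [exact: filterT| exact: fam0].
    move=> [[A1 K1] e1] [[A2 K2] e2] [/= FA1 fK1 e10] [/= FA2 fK2 e20].
    have [K [fK sK1 sK2]] := fam_directed HY fK1 fK2.
    exists (A1 `&` A2, K, Order.min e1 e2).
      by split => //=; [exact: filterI | rewrite lt_min e10].
    move=> x [/= Bx [a [A1a A2a] cl]]; split.
      split => //; exists a => // f /sK1 Kf.
      by apply: (lt_le_trans (cl f Kf)); rewrite ge_min lexx.
    split => //; exists a => // f /sK2 Kf.
    by apply: (lt_le_trans (cl f Kf)); rewrite ge_min lexx orbT.
  move=> [[A K] e] [/= FA fK e0].
  have [x0 Ax0 [z [zc hz]]] := approxG HY PF Fc c0 hc FA fK e0.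
  exists z; split.
    move=> K' e' fK' e'0; exists z => //= f _.
    by rewrite subrr normr0.
  exists x0 => //= f Kf; by rewrite distrC; apply: hz.
have HB : H B.
  by exists (setT, set0, 1); [split => //=; [exact: filterT|exact: fam0] | move=> x []].
have Bbd : mackey_bounded Y B.
  move=> K fK; have [L [L0 hL]] := famb fK.
  exists (L * c + 1) => x f Bx Kf.
  have [b Db hb] := Bx K 1 fK ltr01.
  have := hb f Kf.
  have := hL f b Kf.
  move: Db; rewrite /D /= => bc hfb hdiff.
  have := norm_le_dist (f x) (f b).
  move/le_trans; apply; apply: lerD; last exact: ltW.
  by apply: (le_trans hfb); apply: ler_wpM2l.
have Bcl : mackey_closed Y B.
  move=> x hx K e fK e0.
  have [b Bb hb] := hx K (e / 2) fK (divr_gt0 e0 (ltr0Sn _ 1)).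
  have [d Dd hd] := Bb K (e / 2) fK (divr_gt0 e0 (ltr0Sn _ 1)).
  exists d => // f Kf.
  have := hb f Kf; have := hd f Kf => h1 h2.
  rewrite (splitr e).
  apply: le_lt_trans (ltrD h1 h2).
  exact: ler_distD.
have Hc : mackey_cauchy Y H.
  move=> K e fK e0.
  have e30 : 0 < e / 3 by rewrite divr_gt0.
  have [A FA hA] := Fc K (e / 3) fK e30.
  exists (G (A, K, e / 3)); first by exists (A, K, e / 3).
  move=> x y [_ [a Aa hax]] [_ [b Ab hby]] f Kf.
  have h := ltrD (ltrD (hax f Kf) (hA a b Aa Ab f Kf)) (hby f Kf).
  have -> : e = e / 3 + e / 3 + e / 3 by field.
  apply: le_lt_trans h.
  rewrite (distrC (f a) (f x)); exact: dist3.
have [x Bx hx] := QC B Bbd Bcl H HF HB Hc.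
exists x => // K e fK e0.
have e30 : 0 < e / 3 by rewrite divr_gt0.
have [A FA hA] := Fc K (e / 3) fK e30.
have HG : H (G (A, K, e / 3)) by exists (A, K, e / 3).
apply: filterS FA => y Ay f Kf.
have [w [[_ [a Aa haw]] hwx]] := filter_ex (filterI HG (hx K (e / 3) fK e30)).
have h := ltrD (ltrD (hA y a Ay Aa f Kf) (haw f Kf)) (hwx f Kf).
have -> : e = e / 3 + e / 3 + e / 3 by field.
apply: le_lt_trans h.
exact: dist3.
Qed.
End Hard.

Unset Implicit Arguments.
Theorem proposition2p5 (R : realType) (X : completeNormedModType R)
    (Y : set (X -> R)) :
  dual_subspace Y -> weak_star_dense Y -> dual_norm_closed Y ->
  (mackey_quasi_complete Y <-> mackey_complete Y).
Proof.
move=> HY _ Hcl; split; first exact: qc_complete.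
move=> C B _ Bcl F PF FB Fc.
have [x _ conv] := C F PF filterT Fc.
exists x => //; apply: Bcl => K e fK e0.
have /filter_ex [b [Bb Gb]] : F (B `&` [set y | mackey_close Y K e y x]).
  by apply: filterI => //; exact: conv.
by exists b.
Qed.
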